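(* Let $G$ be a directed graph in which every vertex is reachable from a vertex $s$, let $t$ be a vertex of $G$, and let $k\ge 1$ be an integer. Assume that for no $\ell\in\{k,k+1,\dots,2k-1\}$ does $G$ contain an $(s,t)$-path of length exactly $dist_G(s,t)+\ell$, and assume that $G$ contains an $(s,t)$-path of length at least $dist_G(s,t)+k$. Let $P$ be such a path of minimum length. For $i\ge 0$ let $L_i$ be the set of vertices at distance exactly $i$ from $s$ in $G$. Let $p$ be the smallest integer $i\ge 1$ such that $L_i$ contains more than one vertex of $P$, and let $u$ and $v$ be, respectively, the first and second vertices of $P$ (in the order along $P$) lying in $L_p$. Then the subpath $P_{u,v}$ of $P$ from $u$ to $v$ has length larger than $k$.
   Context: Paths are simple directed paths; the length of a path is its number of edges. $dist_G(a,b)$ denotes the length of a shortest directed $(a,b)$-path in $G$. For a path $P$ and vertices $a,b$ on it (with $a$ before $b$), $P_{a,b}$ denotes the subpath of $P$ from $a$ to $b$. *)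

(* Defs.v *)
From mathcomp Require Import all_boot.
Set Implicit Arguments. Unset Strict Implicit. Unset Printing Implicit Defensive.

(* A (simple directed) (a,b)-path is given by its vertex list a :: q;
   its length (number of edges) is size q. *)
Definition spath (T : finType) (e : rel T) (a b : T) (q : seq T) : bool :=
  [&& path e a q, last a q == b & uniq (a :: q)].

Definition has_path_len (T : finType) (e : rel T) (a b : T) (n : nat) : bool :=
  [exists q : n.-tuple T, spath e a b q].

(* dist_G(a,b): the least length of an (a,b)-path (simple paths have fewer
   than #|T| edges, so searching 0 .. #|T|-1 suffices; the value #|T| is
   returned when b is unreachable from a, a case never used below). *)
Definition dist (T : finType) (e : rel T) (a b : T) : nat :=
  find (has_path_len e a b) (iota 0 #|T|).

(* Main.v *)
Require Import Defs.
From mathcomp Require Import all_boot zify.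
Set Warnings "-notation-overridden".
Set Implicit Arguments. Unset Strict Implicit. Unset Printing Implicit Defensive.

Section S.
Variables (T : finType) (e : rel T).

Lemma spath_lt a b q : spath e a b q -> size q < #|T|.
Proof.
case/and3P=> _ _ U. have := max_card (mem (a :: q)).
by move/card_uniqP: U => ->.
Qed.

Lemma hpl_spath a b m : has_path_len e a b m -> exists2 q, spath e a b q & size q = m.
Proof. by case/existsP=> q H; exists (tval q) => //; rewrite size_tuple. Qed.

Lemma spath_hpl a b q : spath e a b q -> has_path_len e a b (size q).
Proof. by move=> H; apply/existsP; exists (in_tuple q). Qed.

Lemma dist_le a b m : has_path_len e a b m -> dist e a b <= m /\ has_path_len e a b (dist e a b).
Proof.
move=> H. have [q Hq Hs] := hpl_spath H.
have Hm : m < #|T| by rewrite -Hs; exact: (spath_lt Hq).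
have Hi : nth 0 (iota 0 #|T|) m = m by rewrite nth_iota.
have Hhas : has (has_path_len e a b) (iota 0 #|T|).
  by apply/hasP; exists m => //; rewrite mem_iota.
split.
  rewrite leqNgt; apply/negP => /(before_find 0); by rewrite Hi H.
have Hf : find (has_path_len e a b) (iota 0 #|T|) < #|T| by rewrite -[X in _ < X](size_iota 0 #|T|) -has_find.
have := nth_find 0 Hhas. by rewrite nth_iota.
Qed.

Lemma walk_dist a w : path e a w -> dist e a (last a w) <= size w /\ has_path_len e a (last a w) (dist e a (last a w)).
Proof.
move=> Pw; case: (shortenP Pw) => q Pq Uq Sq.
have H : has_path_len e a (last a q) (size q) by apply: spath_hpl; rewrite /spath Pq Uq eqxx.
have [H1 H2] := dist_le H; split => //.
apply: leq_trans H1 _; apply: uniq_leq_size => //; by case/andP: Uq.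
Qed.

Lemma dist_spec a b : connect e a b -> exists2 q, spath e a b q & size q = dist e a b.
Proof.
case/connectP => w Pw ->. have [_ H] := walk_dist Pw. exact: hpl_spath.
Qed.

Lemma dist0 a b : connect e a b -> dist e a b = 0 -> b = a.
Proof.
move=> C D; have [q /and3P[_ /eqP L _] Hs] := dist_spec C.
by move: Hs L; rewrite D => /size0nil ->.
Qed.

Lemma dist_edge a x y : connect e a x -> e x y -> dist e a y <= (dist e a x).+1.
Proof.
move=> C E; have [q /and3P[Pq /eqP L _] Hs] := dist_spec C.
have Pw : path e a (rcons q y) by rewrite rcons_path Pq L E.
have [H _] := walk_dist Pw. by move: H; rewrite last_rcons size_rcons Hs.
Qed.

Lemma last_take_nth (x : T) p j : j <= size p -> last x (take j p) = nth x (x :: p) j.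
Proof.
elim: p x j => [|a p IH] x [|j] //= Hj.
rewrite IH //. by apply: set_nth_default.
Qed.

Lemma prefix_dist a p j : path e a p -> j <= size p -> dist e a (nth a (a :: p) j) <= j.
Proof.
move=> Pp Hj. rewrite -(cat_take_drop j p) cat_path in Pp. case/andP: Pp => Pt _.
have [H _] := walk_dist Pt. move: H; rewrite last_take_nth // size_take.
case: ltnP => //; lia.
Qed.
End S.

Theorem lemma2 (T : finType) (e : rel T) (s t : T) (k : nat) (P : seq T)
  (p i1 i2 : nat) :
  (forall x : T, connect e s x) ->
  1 <= k ->
  (forall (l : nat) (q : seq T), k <= l <= 2 * k - 1 -> spath e s t q ->
      size q != dist e s t + l) ->
  (* P is an (s,t)-path (vertex list s :: P) of length >= dist + k, of minimum length *)
  spath e s t P -> dist e s t + k <= size P ->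
  (forall Q : seq T, spath e s t Q -> dist e s t + k <= size Q ->
      size P <= size Q) ->
  (* p is the least i >= 1 such that L_i contains more than one vertex of P *)
  1 <= p ->
  1 < #|[set x in s :: P | dist e s x == p]| ->
  (forall i, 1 <= i < p -> #|[set x in s :: P | dist e s x == i]| <= 1) ->
  (* u = (s :: P)_i1 and v = (s :: P)_i2 are the first and second vertices of P in L_p *)
  i1 < i2 < size (s :: P) ->
  dist e s (nth s (s :: P) i1) = p ->
  dist e s (nth s (s :: P) i2) = p ->
  (forall j, j < i2 -> j != i1 -> dist e s (nth s (s :: P) j) != p) ->
  (* the subpath P_{u,v} has length i2 - i1 *)
  k < i2 - i1.
Proof.
move=> Hconn Hk Hgap HP HPk Hmin Hp1 Hcard Hle1 /andP[Hi12 Hi2n] Hu Hv Hfirst.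
have HP' := HP.
case/and3P: HP' => PP /eqP LP UW.
have Hi2P : i2 <= size P by [].
pose lev j := dist e s (nth s (s :: P) j).
have step : forall j, j < size P -> lev j.+1 <= (lev j).+1.
  move=> j Hj; apply: dist_edge (Hconn _) _; exact: (pathP s PP).
have pref : forall j, j <= size P -> lev j <= j.
  move=> j Hj; exact: prefix_dist.
have lev0 : lev 0 = 0 by apply/eqP; rewrite -leqn0; exact: pref.
have inj : forall j j', j < size (s :: P) -> j' < size (s :: P) -> lev j = lev j' -> lev j < p -> j = j'.
  move=> j j' Hj Hj' E Hlt.
  have EE : nth s (s :: P) j = nth s (s :: P) j'.
    case Hl: (lev j) => [|l].
      rewrite (dist0 (Hconn _) Hl) (dist0 (Hconn _) (etrans (esym E) Hl)) //.
    have Hl1 : 1 <= l.+1 < p by rewrite /= -Hl.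
    move/card_le1_eqP: (Hle1 _ Hl1); apply; rewrite inE mem_nth //=.
      1,2: apply/eqP; by [apply: Hl | apply: (etrans (esym E) Hl)].
  by apply/eqP; rewrite -(nth_uniq s Hj Hj' UW) EE.
have below : forall j, j < i1 -> lev j < p.
  elim=> [|j IH] Hj; first by rewrite lev0.
  have H1 := IH (ltnW Hj).
  have H2 := step j (ltn_trans (ltn_trans Hj Hi12) Hi2n).
  have H3 : lev j.+1 != p by apply: Hfirst; [apply: ltn_trans Hj Hi12 | rewrite ltn_eqF].
  rewrite ltn_neqAle H3 /=; exact: leq_trans H2 H1.
have i1p : i1 <= p.
  have U : uniq (map lev (iota 0 i1)).
    rewrite map_inj_in_uniq ?iota_uniq // => j j'; rewrite !mem_iota /= => Hj Hj' E.
    apply: inj E (below _ Hj) => /=; lia.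
  have := uniq_leq_size U (s2 := iota 0 p).
  rewrite size_map !size_iota; apply => x /mapP[j]; rewrite mem_iota => /= Hj ->.
  by rewrite mem_iota /= below.
have pi1 : p <= i1 by rewrite -Hu; apply: pref; lia.
have ivt : forall l m, m <= size P -> l <= lev m -> exists2 j, j <= m & lev j = l.
  move=> l; elim=> [|m IH] Hm Hl.
    by exists 0 => //; move: Hl; rewrite lev0 leqn0 => /eqP ->.
  case: (leqP l (lev m)) => Hlm.
    by have [j Hj1 Hj2] := IH (ltnW Hm) Hlm; exists j => //; apply: leq_trans Hj1 _.
  exists m.+1 => //; apply/eqP; rewrite eqn_leq Hl andbT.
  exact: leq_trans (step _ Hm) Hlm.
have [R /and3P[PR /eqP LR UR] SR] := dist_spec (Hconn (nth s (s :: P) i2)).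
rewrite Hv in SR.
have Ri2 : i2 <= size P by [].
have Rpref : forall y, y \in s :: R -> dist e s y <= p /\ (dist e s y = p -> y = nth s (s :: P) i2).
  move=> y yR. have Hi := index_mem y (s :: R). rewrite yR /= ltnS in Hi.
  have Ey := nth_index s yR.
  have Hd := prefix_dist PR Hi. rewrite Ey in Hd.
  split; first by rewrite -SR; exact: leq_trans Hd Hi.
  move=> Hdp. have Hix : index y (s :: R) = size R by apply/eqP; rewrite eqn_leq Hi SR -Hdp Hd.
  by rewrite -Ey Hix -LR -last_take_nth // take_size.
pose D := drop i2 P.
have PD : path e (nth s (s :: P) i2) D.
  have E0 : path e s (take i2 P ++ drop i2 P) by rewrite cat_take_drop.
  move: E0; rewrite cat_path => /andP[_].
  by rewrite last_take_nth.
have LD : last (nth s (s :: P) i2) D = t.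
  by rewrite -LP -{2}(cat_take_drop i2 P) last_cat last_take_nth.
have HQ : spath e s t (R ++ D).
  apply/and3P; split; [by rewrite cat_path PR LR PD | by rewrite last_cat LR LD |].
  rewrite -cat_cons cat_uniq UR drop_uniq ?andbT; last by case/andP: UW.
  apply/hasPn => y yD; apply/negP => yR.
  have Hm := index_mem y D. rewrite yD in Hm.
  have Ey := nth_index s yD.
  rewrite /D nth_drop in Ey.
  have HjW : (i2 + index y D).+1 < size (s :: P) by move: Hm; rewrite /D size_drop /=; lia.
  have Ey' : nth s (s :: P) (i2 + index y D).+1 = y by [].
  have [Hd1 Hd2] := Rpref y yR.
  case: (ltngtP (dist e s y) p) => Hdp; last 1 first.
  - have := Hd2 Hdp => Ev. move: Ev; rewrite -Ey' => Ev.
    move/eqP: Ev; rewrite (nth_uniq s HjW Hi2n UW); lia.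
  - have [j' Hj'1 Hj'2] := ivt (dist e s y) i1 ltac:(lia) ltac:(by rewrite /lev Hu ltnW).
    have := inj j' (i2 + index y D).+1 ltac:(lia) HjW.
    rewrite Hj'2 /lev Ey' => /(_ erefl Hdp); lia.
  - lia.
have SQ : size (R ++ D) = p + (size P - i2) by rewrite size_cat SR size_drop.
have Hm := Hmin _ HQ. rewrite SQ in Hm.
have G := Hgap (size P - dist e s t) P.
rewrite ltnNge; apply/negP => Hd.
case: (leqP (dist e s t + k) (p + (size P - i2))) => H1.
  have := Hm H1; lia.
have HG := G ltac:(lia) HP.
by move: HG; rewrite subnKC ?eqxx //; lia.
Qed.
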